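(* Let $f:\{1,\dots,n\}\to\{0,1\}$, let $S=\{i: f(i)=1\}$, and let $T=f(1)f(2)\cdots f(n)$. Then the number $r$ of runs in the Burrows–Wheeler Transform of $T$ satisfies $r\le 2|S|+1$.
   Context: The Burrows–Wheeler Transform (BWT) of $T$ is the last column of the matrix whose rows are the cyclic rotations of $T$ sorted lexicographically; it is a permutation of the symbols of $T$. $r$ is the number of maximal runs of equal consecutive symbols in the BWT. *)

(* Defs.v *)
From mathcomp Require Import all_boot.
Set Implicit Arguments. Unset Strict Implicit. Unset Printing Implicit Defensive.

Fixpoint lex_le (s t : seq nat) : bool :=
  match s, t with
  | [::], _ => true
  | _ :: _, [::] => false
  | x :: s', y :: t' => (x < y) || ((x == y) && lex_le s' t')
  end.

Definition rotations (T : seq nat) : seq (seq nat) :=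
  [seq rot i T | i <- iota 0 (size T)].

Definition bwt (T : seq nat) : seq nat :=
  [seq last 0 row | row <- sort lex_le (rotations T)].

Definition runs (s : seq nat) : nat :=
  match s with
  | [::] => 0
  | x :: s' => (count (fun p : nat * nat => p.1 != p.2) (zip (x :: s') s')).+1
  end.

Definition word_of (n : nat) (f : 'I_n -> bool) : seq nat :=
  [seq nat_of_bool (f i) | i <- enum 'I_n].

(* Main.v *)
Require Import Defs.
From mathcomp Require Import all_boot.
From mathcomp Require Import zify.

Lemma runs_bound_aux (x : nat) (s : seq nat) :
  all (fun y => y <= 1) (x :: s) ->
  runs (x :: s) + (x == 1) <= 2 * count (fun y => y != 0) (x :: s) + 1.
Proof.
elim: s x => [|y s IH] x /=.
  by case: x => [|[|]].
move=> /and3P [hx hy hs].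
have := IH y; rewrite /= hy hs => /(_ isT).
case: x hx => [|[|]] // _; case: y hy => [|[|]] // _ /=; lia.
Qed.

Lemma runs_bound (s : seq nat) :
  all (fun y => y <= 1) s -> runs s <= 2 * count (fun y => y != 0) s + 1.
Proof.
case: s => [|x s] //= H.
have := @runs_bound_aux x s H; rewrite /=; lia.
Qed.

Lemma lastrot (T : seq nat) :
  [seq last 0 (rot i T) | i <- iota 0 (size T)] = rotr 1 T.
Proof.
case: T => [|a T'] //; set T := a :: T'.
apply: (@eq_from_nth _ 0); first by rewrite size_map size_iota size_rotr.
rewrite size_map size_iota => i Hi.
rewrite (nth_map 0) ?size_iota // nth_iota // add0n.
rewrite /rotr subn1 /= /rot.
rewrite nth_cat size_drop /= subSn // subnn.
case: i Hi => [|i] Hi /=.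
  rewrite nth_drop addn0 /= cats0.
  by rewrite -[last a T']/(last 0 (a :: T')) -nth_last.
rewrite subn1 /= nth_take //.
rewrite last_cat /= -[last a _]/(last 0 (take i.+1 T)) -nth_last size_take.
by rewrite Hi nth_take.
Qed.

Theorem lemma12 (n : nat) (f : 'I_n -> bool) :
  runs (bwt (word_of f)) <= 2 * #|[set i | f i]| + 1.
Proof.
have Hp : perm_eq (bwt (word_of f)) (word_of f).
  rewrite /bwt.
  have -> : [seq last 0 row | row <- sort lex_le (rotations (word_of f))] =
     map (last 0) (sort lex_le (rotations (word_of f))) by [].
  apply: perm_trans (perm_map _ (permEl (perm_sort _ _))) _.
  rewrite /rotations -map_comp.
  have -> : map (last 0 \o rot^~ (word_of f)) (iota 0 (size (word_of f))) = rotr 1 (word_of f) by rewrite -lastrot.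
  by rewrite perm_rotr.
have Hall : all (fun y => y <= 1) (bwt (word_of f)).
  rewrite (perm_all _ Hp) /word_of all_map; apply/allP => i _ /=.
  by case: (f i).
apply: leq_trans (runs_bound _ Hall) _.
rewrite (permP Hp) /word_of count_map cardsE cardE -size_filter enumT.
apply: eq_leq; congr (2 * size _ + 1); apply: eq_filter => i /=.
by rewrite unfold_in; case: (f i).
Qed.
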